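(* Let $\Gamma=\{b_1q_1\overline{b_1'}=0,\dots,b_mq_m\overline{b_m'}=0\}\cup\{c_1\le c_1',\dots,c_n\le c_n'\}$ be a finite set of assumptions with $q_i\in\Sigma$ and all $b_i,b_i',c_j,c_j'$ Boolean expressions. Then for all KAT expressions $e_1,e_2$: the equation $e_1=e_2$ is derivable from the KAT axioms together with the hypotheses in $\Gamma$ (i.e. $\mathsf{KAT},\Gamma\vdash e_1=e_2$, meaning the Horn formula $\bigwedge\Gamma\to e_1=e_2$ holds in every Kleene algebra with tests under every interpretation of the action and test symbols) if and only if $\mathsf{GS}^\Gamma(e_1)=\mathsf{GS}^\Gamma(e_2)$.
   Context: Let $\Sigma=\{p_1,\dots,p_k\}$ ($k\ge1$) be a finite set of action symbols and $T=\{t_1,\dots,t_l\}$ ($l\ge1$) a finite set of test symbols. Boolean expressions: $b::=0\mid 1\mid t\mid \overline{b}\mid b_1+b_2\mid b_1 b_2$; KAT expressions (syntactic terms): $e::=p\in\Sigma\mid b\mid e_1+e_2\mid e_1e_2\mid e^*$. A Kleene algebra with tests is a structure $(K,B,+,\cdot,^*,0,1,\bar{\ })$ where $(K,+,\cdot,^*,0,1)$ is a Kleene algebra, $B\subseteq K$, $(B,+,\cdot,\bar{\ },0,1)$ is a Boolean algebra and a subalgebra of $(K,+,\cdot,0,1)$; $x\le y$ means $x+y=y$; test symbols are interpreted in $B$. $\mathsf{At}$ is the set of atoms (words $b_1\cdots b_l$ with $b_i\in\{t_i,\overline{t_i}\}$), identified with truth assignments to $T$; $\alpha\le b$ means $b$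 is true under $\alpha$. Guarded strings: $\mathsf{GS}=(\mathsf{At}\cdot\Sigma)^*\cdot\mathsf{At}$. The fusion product $xy$ is defined only when the last atom of $x$ equals the first atom of $y$, and is the concatenation with one copy of that atom omitted; $X\diamond Y=\{xy\mid x\in X,y\in Y,xy\text{ defined}\}$, $X^{n+1}=X\diamond X^n$. $\mathsf{At}^\Gamma=\{\alpha\in\mathsf{At}\mid \alpha\le c\Rightarrow\alpha\le c'\text{ for all }(c\le c')\in\Gamma\}$. Guarded strings modulo $\Gamma$: $\mathsf{GS}^\Gamma(p)=\{\alpha p\beta\mid\alpha,\beta\in\mathsf{At}^\Gamma\text{ and for every assumption }bp\overline{b'}=0\text{ in }\Gamma\text{ (with this same }p),\ \alpha\le b\Rightarrow\beta\le b'\}$; $\mathsf{GS}^\Gamma(b)=\{\alpha\in\mathsf{At}^\Gamma\mid\alpha\le b\}$; $\mathsf{GS}^\Gamma(e_1+e_2)=\mathsf{GS}^\Gamma(e_1)\cup\mathsf{GS}^\Gamma(e_2)$; $\mathsf{GS}^\Gamma(e_1e_2)=\mathsf{GS}^\Gamma(e_1)\diamond\mathsf{GS}^\Gamma(e_2)$; $\mathsf{GS}^\Gamma(e^* )=\bigcup_{n\ge0}\mathsf{GS}^\Gamma(e)^n$ with $X^0=\mathsf{At}^\Gamma$. *)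

(* Defs.v *)
From mathcomp Require Import all_boot.
From Stdlib Require List.
Set Implicit Arguments. Unset Strict Implicit. Unset Printing Implicit Defensive.

Record KAT := MkKAT {
  kcar :> Type;
  kadd : kcar -> kcar -> kcar;
  kmul : kcar -> kcar -> kcar;
  kstar : kcar -> kcar;
  kzero : kcar;
  kone : kcar;
  ktest : kcar -> Prop;          (* membership in the Boolean subalgebra B *)
  kneg : kcar -> kcar;           (* complement; only meaningful on B *)
  kaddA : forall x y z, kadd x (kadd y z) = kadd (kadd x y) z;
  kaddC : forall x y, kadd x y = kadd y x;
  kadd0 : forall x, kadd x kzero = x;
  kaddI : forall x, kadd x x = x;
  kmulA : forall x y z, kmul x (kmul y z) = kmul (kmul x y) z;
  kmul1l : forall x, kmul kone x = x;
  kmul1r : forall x, kmul x kone = x;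
  kmulDl : forall x y z, kmul x (kadd y z) = kadd (kmul x y) (kmul x z);
  kmulDr : forall x y z, kmul (kadd x y) z = kadd (kmul x z) (kmul y z);
  kmul0l : forall x, kmul kzero x = kzero;
  kmul0r : forall x, kmul x kzero = kzero;
  (* star axioms, with x <= y := x + y = y *)
  kstar_unfoldl : forall x, kadd (kadd kone (kmul x (kstar x))) (kstar x) = kstar x;
  kstar_unfoldr : forall x, kadd (kadd kone (kmul (kstar x) x)) (kstar x) = kstar x;
  kstar_indl : forall a b x, kadd (kadd b (kmul a x)) x = x ->
                             kadd (kmul (kstar a) b) x = x;
  kstar_indr : forall a b x, kadd (kadd b (kmul x a)) x = x ->
                             kadd (kmul b (kstar a)) x = x;
  ktest0 : ktest kzero;
  ktest1 : ktest kone;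
  ktestD : forall b c, ktest b -> ktest c -> ktest (kadd b c);
  ktestM : forall b c, ktest b -> ktest c -> ktest (kmul b c);
  ktestN : forall b, ktest b -> ktest (kneg b);
  (* (B,+,.,neg,0,1) is a Boolean algebra (Huntington's axioms; the ones
     already implied by the semiring axioms are not repeated) *)
  kBmulC : forall b c, ktest b -> ktest c -> kmul b c = kmul c b;
  kBaddDr : forall b c d, ktest b -> ktest c -> ktest d ->
                kadd b (kmul c d) = kmul (kadd b c) (kadd b d);
  kBcompl1 : forall b, ktest b -> kadd b (kneg b) = kone;
  kBcompl0 : forall b, ktest b -> kmul b (kneg b) = kzero
}.

Definition kle (K : KAT) (x y : K) := kadd x y = y.

(* ---------- Syntax: Sigma = 'I_k, T = 'I_l ---------- *)
Inductive bexp (l : nat) : Type :=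
| BZero | BOne | BTest of 'I_l | BNeg of bexp l
| BAdd of bexp l & bexp l | BMul of bexp l & bexp l.

Inductive kexp (k l : nat) : Type :=
| KAct of 'I_k
| KTest of bexp l
| KAdd of kexp k l & kexp k l
| KMul of kexp k l & kexp k l
| KStar of kexp k l.

Arguments BZero {l}. Arguments BOne {l}.

Fixpoint beval (K : KAT) l (J : 'I_l -> K) (b : bexp l) : K :=
  match b with
  | BZero => kzero K
  | BOne => kone K
  | BTest t => J t
  | BNeg b => kneg (beval J b)
  | BAdd b1 b2 => kadd (beval J b1) (beval J b2)
  | BMul b1 b2 => kmul (beval J b1) (beval J b2)
  end.

Fixpoint keval (K : KAT) k l (I : 'I_k -> K) (J : 'I_l -> K) (e : kexp k l) : K :=
  match e with
  | KAct p => I p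
  | KTest b => beval J b
  | KAdd e1 e2 => kadd (keval I J e1) (keval I J e2)
  | KMul e1 e2 => kmul (keval I J e1) (keval I J e2)
  | KStar e => kstar (keval I J e)
  end.

(* Gamma = action assumptions  b q ~b' = 0  (triples (b, q, b'))
         + test assumptions    c <= c'      (pairs (c, c')). *)
Definition Gamma_holds (K : KAT) k l (I : 'I_k -> K) (J : 'I_l -> K)
  (Ga : seq (bexp l * 'I_k * bexp l)) (Gt : seq (bexp l * bexp l)) : Prop :=
  (forall a, List.In a Ga ->
     kmul (kmul (beval J a.1.1) (I a.1.2)) (kneg (beval J a.2)) = kzero K) /\
  (forall c, List.In c Gt -> kle (beval J c.1) (beval J c.2)).

Definition KAT_derivable k l (Ga : seq (bexp l * 'I_k * bexp l))
  (Gt : seq (bexp l * bexp l)) (e1 e2 : kexp k l) : Prop :=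
  forall (K : KAT) (I : 'I_k -> K) (J : 'I_l -> K),
    (forall t, ktest (J t)) ->
    Gamma_holds I J Ga Gt -> keval I J e1 = keval I J e2.

Definition atom (l : nat) := {ffun 'I_l -> bool}.

Fixpoint bsat l (alpha : atom l) (b : bexp l) : bool :=
  match b with
  | BZero => false
  | BOne => true
  | BTest t => alpha t
  | BNeg b => ~~ bsat alpha b
  | BAdd b1 b2 => bsat alpha b1 || bsat alpha b2
  | BMul b1 b2 => bsat alpha b1 && bsat alpha b2
  end.

(* a guarded string alpha_0 p_1 alpha_1 ... p_n alpha_n is represented as
   (alpha_0, [:: (p_1, alpha_1); ...; (p_n, alpha_n)]) *)
Definition gstring k l := (atom l * seq ('I_k * atom l))%type.

Definition gfirst k l (x : gstring k l) : atom l := x.1.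
Definition glast k l (x : gstring k l) : atom l := last x.1 (map snd x.2).

Definition gset k l := gstring k l -> Prop.

Definition gfuse k l (X Y : gset k l) : gset k l :=
  fun z => exists x y, X x /\ Y y /\ glast x = gfirst y /\ z = (x.1, x.2 ++ y.2).

Definition AtG l (Gt : seq (bexp l * bexp l)) (alpha : atom l) : Prop :=
  forall c, List.In c Gt -> bsat alpha c.1 -> bsat alpha c.2.

Definition AtG_set k l (Gt : seq (bexp l * bexp l)) : gset k l :=
  fun z => z.2 = [::] /\ AtG Gt z.1.

Fixpoint gpow k l (Gt : seq (bexp l * bexp l)) (X : gset k l) (n : nat) : gset k l :=
  match n with
  | 0 => @AtG_set k l Gt
  | n.+1 => gfuse X (gpow Gt X n)
  end.

Fixpoint GSG k l (Ga : seq (bexp l * 'I_k * bexp l)) (Gt : seq (bexp l * bexp l))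
  (e : kexp k l) : gset k l :=
  match e with
  | KAct p => fun z => exists alpha beta,
       z = (alpha, [:: (p, beta)]) /\ AtG Gt alpha /\ AtG Gt beta /\
       (forall a, List.In a Ga -> a.1.2 = p -> bsat alpha a.1.1 -> bsat beta a.2)
  | KTest b => fun z => z.2 = [::] /\ AtG Gt z.1 /\ bsat z.1 b
  | KAdd e1 e2 => fun z => GSG Ga Gt e1 z \/ GSG Ga Gt e2 z
  | KMul e1 e2 => gfuse (GSG Ga Gt e1) (GSG Ga Gt e2)
  | KStar e => fun z => exists n, gpow Gt (GSG Ga Gt e) n z
  end.

(* Main.v *)
Require Import Defs.
From mathcomp Require Import all_boot.
From HB Require Import structures.
From Stdlib Require Import Classical ClassicalEpsilon FunctionalExtensionality PropExtensionality ProofIrrelevance.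
Set Implicit Arguments. Unset Strict Implicit. Unset Printing Implicit Defensive.

Infix "⊕" := kadd (at level 50, left associativity).
Infix "⊗" := kmul (at level 40, left associativity).
Notation "x ≦ y" := (kle x y) (at level 70, no associativity).

Section KA.
Variable K : KAT.
Implicit Types x y z a b c : K.

Lemma le_refl x : x ≦ x. Proof. exact: kaddI. Qed.
Lemma le_trans x y z : x ≦ y -> y ≦ z -> x ≦ z.
Proof. rewrite /kle => H1 H2; by rewrite -H2 kaddA H1. Qed.
Lemma le_antisym x y : x ≦ y -> y ≦ x -> x = y.
Proof. rewrite /kle => H1 H2; by rewrite -H1 kaddC H2. Qed.
Lemma le_addl x y : x ≦ x ⊕ y. Proof. by rewrite /kle kaddA kaddI. Qed.
Lemma le_addr x y : y ≦ x ⊕ y. Proof. by rewrite kaddC; apply: le_addl. Qed.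
Lemma add_le x y z : x ≦ z -> y ≦ z -> x ⊕ y ≦ z.
Proof. rewrite /kle => H1 H2; by rewrite -kaddA H2 H1. Qed.
Lemma add_leP x y z : x ⊕ y ≦ z -> x ≦ z /\ y ≦ z.
Proof. move=> H; split; apply: le_trans H; [apply: le_addl|apply: le_addr]. Qed.
Lemma le_add2 x y x' y' : x ≦ x' -> y ≦ y' -> x ⊕ y ≦ x' ⊕ y'.
Proof. move=> H1 H2; apply: add_le; [apply: le_trans H1 (le_addl _ _)|apply: le_trans H2 (le_addr _ _)]. Qed.
Lemma le0 x : kzero K ≦ x. Proof. by rewrite /kle kaddC kadd0. Qed.
Lemma le0_eq x : x ≦ kzero K -> x = kzero K.
Proof. move=> H; apply: le_antisym H (le0 _). Qed.
Lemma mul_lel c x y : x ≦ y -> c ⊗ x ≦ c ⊗ y.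
Proof. rewrite /kle => H; by rewrite -kmulDl H. Qed.
Lemma mul_ler c x y : x ≦ y -> x ⊗ c ≦ y ⊗ c.
Proof. rewrite /kle => H; by rewrite -kmulDr H. Qed.
Lemma mul_le2 x y x' y' : x ≦ x' -> y ≦ y' -> x ⊗ y ≦ x' ⊗ y'.
Proof. move=> H1 H2; apply: le_trans (mul_ler _ H1) (mul_lel _ H2). Qed.

Lemma star_ind_l a b x : b ≦ x -> a ⊗ x ≦ x -> kstar a ⊗ b ≦ x.
Proof. move=> H1 H2; apply: kstar_indl; exact: add_le. Qed.
Lemma star_ind_r a b x : b ≦ x -> x ⊗ a ≦ x -> b ⊗ kstar a ≦ x.
Proof. move=> H1 H2; apply: kstar_indr; exact: add_le. Qed.
Lemma one_le_star a : kone K ≦ kstar a.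
Proof. by have [] := add_leP (kstar_unfoldl a). Qed.
Lemma mul_star_le a : a ⊗ kstar a ≦ kstar a.
Proof. by have [] := add_leP (kstar_unfoldl a). Qed.
Lemma star_mul_le a : kstar a ⊗ a ≦ kstar a.
Proof. by have [] := add_leP (kstar_unfoldr a). Qed.
Lemma le_star a : a ≦ kstar a.
Proof. rewrite -{1}(kmul1r a); apply: le_trans (mul_lel _ (one_le_star a)) (mul_star_le a). Qed.
Lemma star_star_le a : kstar a ⊗ kstar a ≦ kstar a.
Proof. apply: star_ind_l; [apply: le_refl | apply: mul_star_le]. Qed.
Lemma star_le_star a x : kone K ≦ x -> a ⊗ x ≦ x -> kstar a ≦ x.
Proof. move=> H1 H2; rewrite -(kmul1r (kstar a)); exact: star_ind_l. Qed.

End KA.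


Definition pb (P : Prop) : bool := if excluded_middle_informative P then true else false.
Lemma pbE (P : Prop) : pb P <-> P.
Proof. rewrite /pb; case: excluded_middle_informative => //. Qed.

Section Sums.
Variable K : KAT.
Implicit Types x y z a b c : K.

Definition ksum_s (T : Type) (s : seq T) (P : T -> Prop) (F : T -> K) : K :=
  foldr (fun i acc => (if pb (P i) then F i else kzero K) ⊕ acc) (kzero K) s.

Definition ksum (T : finType) (P : T -> Prop) (F : T -> K) : K := ksum_s (enum T) P F.

Lemma ksum_s_le T (s : seq T) P F x :
  (forall i, List.In i s -> P i -> F i ≦ x) -> ksum_s s P F ≦ x.
Proof.
elim: s => [|i s IH] H /=; first exact: le0.
apply: add_le; last by apply: IH => j Hj; apply: H; right.
case: ifP => [/pbE Pi|_]; last exact: le0.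
by apply: H => //; left.
Qed.

Lemma le_ksum_s T (s : seq T) P F i y :
  List.In i s -> P i -> y ≦ F i -> y ≦ ksum_s s P F.
Proof.
elim: s => [|j s IH] //= [->|Hi] Pi Hy.
  have -> : pb (P i) by apply/pbE.
  exact: le_trans Hy (le_addl _ _).
exact: le_trans (IH Hi Pi Hy) (le_addr _ _).
Qed.

Lemma ksum_s_mull T (s : seq T) P F c :
  c ⊗ ksum_s s P F = ksum_s s P (fun i => c ⊗ F i).
Proof.
elim: s => [|i s IH] /=; first exact: kmul0r.
by rewrite kmulDl IH; case: ifP => _ //; rewrite kmul0r.
Qed.

Lemma ksum_s_mulr T (s : seq T) P F c :
  ksum_s s P F ⊗ c = ksum_s s P (fun i => F i ⊗ c).
Proof.
elim: s => [|i s IH] /=; first exact: kmul0l.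
by rewrite kmulDr IH; case: ifP => _ //; rewrite kmul0l.
Qed.

Lemma inE_enum (T : finType) (i : T) : List.In i (enum T).
Proof.
have : i \in enum T by rewrite mem_enum.
elim: (enum T) => [|j s IH] //=; rewrite in_cons => /orP [/eqP ->|/IH]; auto.
Qed.

Lemma ksum_le (T : finType) (P : T -> Prop) F x :
  (forall i, P i -> F i ≦ x) -> ksum P F ≦ x.
Proof. move=> H; apply: ksum_s_le => i _; exact: H. Qed.
Lemma le_ksum (T : finType) (P : T -> Prop) F i y :
  P i -> y ≦ F i -> y ≦ ksum P F.
Proof. move=> Pi Hy; apply: le_ksum_s Pi Hy; exact: inE_enum. Qed.
Lemma ksum_mull (T : finType) (P : T -> Prop) F c :
  c ⊗ ksum P F = ksum P (fun i => c ⊗ F i).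
Proof. exact: ksum_s_mull. Qed.
Lemma ksum_mulr (T : finType) (P : T -> Prop) F c :
  ksum P F ⊗ c = ksum P (fun i => F i ⊗ c).
Proof. exact: ksum_s_mulr. Qed.
Lemma ksum_mono (T : finType) (P Q : T -> Prop) F G :
  (forall i, P i -> exists2 j, Q j & F i ≦ G j) -> ksum P F ≦ ksum Q G.
Proof. move=> H; apply: ksum_le => i /H [j Qj Hj]; exact: le_ksum Qj Hj. Qed.

Lemma test_le1 x : ktest x -> x ≦ kone K.
Proof. move=> Hx; by rewrite /kle -(kBcompl1 Hx) kaddA kaddI. Qed.
Lemma test_idem x : ktest x -> x ⊗ x = x.
Proof.
move=> Hx; rewrite -{3}(kmul1r x) -(kBcompl1 Hx) kmulDl (kBcompl0 Hx); by rewrite kadd0.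
Qed.
Lemma test_mul_lel x y : ktest y -> x ⊗ y ≦ x.
Proof. move=> Hy; rewrite -{2}(kmul1r x); apply: mul_lel; exact: test_le1. Qed.
Lemma test_mul_ler x y : ktest x -> x ⊗ y ≦ y.
Proof. move=> Hx; rewrite -{2}(kmul1l y); apply: mul_ler; exact: test_le1. Qed.
Lemma test_le_eq x y : ktest x -> ktest y -> x ≦ y -> x = x ⊗ y.
Proof.
move=> Hx Hy Hxy; apply: le_antisym; last exact: test_mul_lel.
rewrite -{1}(test_idem Hx); exact: mul_lel.
Qed.
Lemma test_meet x y z : ktest z -> z ≦ x -> z ≦ y -> z ≦ x ⊗ y.
Proof. move=> Hz H1 H2; rewrite -(test_idem Hz); exact: mul_le2. Qed.
End Sums.


Section Atoms.
Variable K : KAT.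
Variable l : nat.
Variable J : 'I_l -> K.
Hypothesis hJ : forall t, ktest (J t).

Definition lit (al : atom l) (t : 'I_l) : K := if al t then J t else kneg (J t).
Definition lits (al : atom l) (s : seq 'I_l) : K := foldr (fun t acc => lit al t ⊗ acc) (kone K) s.
Definition atomk (al : atom l) : K := lits al (enum 'I_l).

Lemma lit_test al t : ktest (lit al t).
Proof. rewrite /lit; case: (al t); [exact: hJ | exact: ktestN]. Qed.
Lemma lits_test al s : ktest (lits al s).
Proof. elim: s => [|t s IH] /=; [exact: ktest1 | apply: ktestM => //; exact: lit_test]. Qed.
Lemma atomk_test al : ktest (atomk al). Proof. exact: lits_test. Qed.

Lemma lits_le al s t : t \in s -> lits al s ≦ lit al t.
Proof.
elim: s => [|t' s IH] //=; rewrite in_cons => /orP [/eqP <-|Hs].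
  apply: test_mul_lel; exact: lits_test.
apply: le_trans (IH Hs); apply: test_mul_ler; exact: lit_test.
Qed.
Lemma atomk_le al t : atomk al ≦ lit al t.
Proof. apply: lits_le; by rewrite mem_enum. Qed.

Lemma beval_test b : ktest (beval J b).
Proof.
elim: b => [|||b IH|b1 IH1 b2 IH2|b1 IH1 b2 IH2] /=;
  [exact: ktest0|exact: ktest1|exact: hJ|exact: ktestN|exact: ktestD|exact: ktestM].
Qed.

Lemma unsat_of_le a x : ktest a -> ktest x -> a ≦ kneg x -> a ⊗ x = kzero K.
Proof.
move=> Ha Hx H; rewrite (test_le_eq Ha (ktestN Hx) H) -kmulA (kBmulC (ktestN Hx) Hx).
by rewrite (kBcompl0 Hx) kmul0r.
Qed.

Lemma le_neg_of_unsat a x : ktest a -> ktest x -> a ⊗ x = kzero K -> a ≦ kneg x.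
Proof.
move=> Ha Hx H.
have -> : a = a ⊗ kneg x by rewrite -{1}(kmul1r a) -(kBcompl1 Hx) kmulDl H kaddC kadd0.
exact: test_mul_ler.
Qed.

Lemma atom_bsat al b :
  (bsat al b -> atomk al ≦ beval J b) /\ (~~ bsat al b -> atomk al ⊗ beval J b = kzero K).
Proof.
have Ha := atomk_test al.
elim: b => [|||b [IH1 IH2]|b1 [IH11 IH12] b2 [IH21 IH22]|b1 [IH11 IH12] b2 [IH21 IH22]] /=.
- by split=> // _; rewrite kmul0r.
- by split=> // _; apply: test_le1.
- move=> t; split=> H.
    by have := atomk_le al t; rewrite /lit H.
  apply: (unsat_of_le Ha (hJ t)).
  by have := atomk_le al t; rewrite /lit (negbTE H).
- have Hb := beval_test b. split=> H.
    apply: le_neg_of_unsat => //; exact: IH2.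
  rewrite negbK in H.
  rewrite (test_le_eq Ha Hb (IH1 H)) -kmulA (kBcompl0 Hb) kmul0r //.
- have Hb1 := beval_test b1; have Hb2 := beval_test b2. split.
    case/orP=> H; [apply: le_trans (IH11 H) (le_addl _ _)|apply: le_trans (IH21 H) (le_addr _ _)].
  rewrite negb_or => /andP [H1 H2]; by rewrite kmulDl IH12 // IH22 // kadd0.
- have Hb1 := beval_test b1; have Hb2 := beval_test b2. split.
    case/andP=> H1 H2; apply: test_meet => //; [exact: IH11|exact: IH21].
  rewrite negb_and => /orP [H|H].
    by rewrite kmulA IH12 // kmul0l.
  by rewrite (kBmulC Hb1 Hb2) kmulA IH22 // kmul0l.
Qed.

Lemma atom_sat al b : bsat al b -> atomk al ≦ beval J b.
Proof. by case: (atom_bsat al b). Qed.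
Lemma atom_unsat al b : ~~ bsat al b -> atomk al ⊗ beval J b = kzero K.
Proof. by case: (atom_bsat al b). Qed.
Lemma atom_sat_eq al b : bsat al b -> atomk al = atomk al ⊗ beval J b.
Proof. move=> H; apply: test_le_eq; [exact: atomk_test|exact: beval_test|exact: atom_sat]. Qed.
Lemma atom_unsat_eq al b : ~~ bsat al b -> atomk al = kneg (beval J b) ⊗ atomk al.
Proof.
move=> H; have Hb := beval_test b; have Ha := atomk_test al.
rewrite -(kBmulC Ha (ktestN Hb)); apply: test_le_eq => //; first exact: ktestN.
apply: le_neg_of_unsat => //; exact: atom_unsat.
Qed.
Lemma atomk_idem al : atomk al ⊗ atomk al = atomk al.
Proof. apply: test_idem; exact: atomk_test. Qed.

Definition upd (al : atom l) (t : 'I_l) (v : bool) : atom l :=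
  [ffun i => if i == t then v else al i].

Lemma lits_upd al t v s : t \notin s -> lits (upd al t v) s = lits al s.
Proof.
elim: s => [|t' s IH] //=; rewrite in_cons negb_or => /andP [Ht Hs].
rewrite IH // /lit /upd ffunE eq_sym (negbTE Ht) //.
Qed.

Lemma sum_lits s : uniq s -> kone K ≦ ksum (fun _ : atom l => True) (fun al => lits al s).
Proof.
elim: s => [|t s IH] /=.
  move=> _; apply: (@le_ksum _ _ _ _ [ffun=> false]) => //; exact: le_refl.
case/andP=> Hts Hu; have Ht := hJ t.
set X := ksum _ _.
apply: le_trans (_ : (J t ⊕ kneg (J t)) ⊗ ksum (fun _ => True) (fun al => lits al s) ≦ X).
  rewrite kBcompl1 // kmul1l; exact: IH.
rewrite kmulDr !ksum_mull; apply: add_le; apply: ksum_le => al _.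
- apply: (@le_ksum _ _ _ _ (upd al t true)) => //=.
  by rewrite lits_upd // /lit /upd ffunE eqxx; apply: le_refl.
- apply: (@le_ksum _ _ _ _ (upd al t false)) => //=.
  by rewrite lits_upd // /lit /upd ffunE eqxx; apply: le_refl.
Qed.

Lemma sum_atoms : kone K ≦ ksum (fun _ : atom l => True) atomk.
Proof. apply: sum_lits; exact: enum_uniq. Qed.

End Atoms.


Section GS.
Variables k l : nat.
Implicit Types x y : gstring k l.

Definition goodgs (Gt : seq (bexp l * bexp l)) x :=
  AtG Gt x.1 /\ forall pb, List.In pb x.2 -> AtG Gt pb.2.

Lemma glast_fuse x y : glast x = gfirst y -> glast ((x.1, x.2 ++ y.2) : gstring k l) = glast y.
Proof.
rewrite /glast /gfirst /= => H; by rewrite map_cat last_cat H.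
Qed.

Lemma glast_good Gt x : goodgs Gt x -> AtG Gt (glast x).
Proof.
case: x => a s [H1 H2] /=; rewrite /glast /=.
elim: s a H1 H2 => [|[p b] s IH] a H1 H2 //=.
apply: IH; first by apply: (H2 (p, b)); left.
by move=> pb Hp; apply: H2; right.
Qed.

Lemma fuse_good Gt x y : goodgs Gt x -> goodgs Gt y -> goodgs Gt ((x.1, x.2 ++ y.2) : gstring k l).
Proof.
move=> [H1 H2] [H3 H4]; split => //= pb Hp; case: (List.in_app_or _ _ _ Hp); auto.
Qed.

Lemma gpow_good Gt (X : gset k l) n x :
  (forall w, X w -> goodgs Gt w) -> gpow Gt X n x -> goodgs Gt x.
Proof.
move=> HX; elim: n x => [|n IH] x /=.
  by case=> H1 H2; split => //; rewrite H1.
move=> [x1 [x2 [H1 [H2 [_ ->]]]]]; apply: fuse_good; [exact: HX|exact: IH].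
Qed.

Lemma GSG_good Ga Gt e x : GSG Ga Gt e x -> goodgs Gt x.
Proof.
elim: e x => [p|b|e1 IH1 e2 IH2|e1 IH1 e2 IH2|e1 IH1] x /=.
- by move=> [a [b [-> [H1 [H2 _]]]]]; split => //= pb [<-|].
- by move=> [H1 [H2 _]]; split => //; rewrite H1.
- case; auto.
- move=> [x1 [x2 [H1 [H2 [_ ->]]]]]; apply: fuse_good; auto.
- move=> [n Hn]; exact: gpow_good Hn.
Qed.

Lemma gpow_snoc Gt (X : gset k l) n x y :
  (forall w, X w -> AtG Gt (glast w)) ->
  gpow Gt X n x -> X y -> glast x = gfirst y -> gpow Gt X n.+1 (x.1, x.2 ++ y.2).
Proof.
move=> HX; elim: n x => [|n IH] x /=.
  case: x => a s [/= -> Ha] Hy; rewrite /glast /gfirst /= => Hay.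
  exists y, (glast y, [::]); split => //; split; first by split => //; apply: HX.
  split => //; case: y Hy Hay => b t /= _ -> ; by rewrite cats0.
move=> [x1 [x2 [H1 [H2 [H3 ->]]]]] Hy Hxy.
exists x1, (x2.1, x2.2 ++ y.2); split => //; split.
  apply: IH => //; by rewrite -Hxy /= glast_fuse.
by split => //=; rewrite catA.
Qed.

Section Run.
Variable Q : Type.
Variable dl : Q -> atom l -> 'I_k -> Q.
Fixpoint runl (q : Q) (al : atom l) (s : seq ('I_k * atom l)) : Q :=
  match s with [::] => q | (p, b) :: s' => runl (dl q al p) b s' end.
Definition run q x := runl q x.1 x.2.

Lemma runl_cat q al s1 s2 :
  runl q al (s1 ++ s2) = runl (runl q al s1) (last al (map snd s1)) s2.
Proof. by elim: s1 q al => [|[p b] s1 IH] q al //=. Qed.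

Lemma run_fuse q x y : glast x = gfirst y ->
  run q ((x.1, x.2 ++ y.2) : gstring k l) = run (run q x) y.
Proof. rewrite /run /= runl_cat /glast /gfirst => ->; by case: y. Qed.
End Run.
End GS.

Section Claim.
Variable K : KAT.
Variables k l : nat.
Variable I : 'I_k -> K.
Variable J : 'I_l -> K.
Hypothesis hJ : forall t, ktest (J t).
Variable Ga : seq (bexp l * 'I_k * bexp l).
Variable Gt : seq (bexp l * bexp l).
Hypothesis HG : Gamma_holds I J Ga Gt.

Notation at_ := (atomk J).

Lemma bad_atom al : ~ AtG Gt al -> at_ al = kzero K.
Proof.
move=> H.
have [c [Hc H']] : exists c, List.In c Gt /\ ~ (bsat al c.1 -> bsat al c.2).
  apply: NNPP => H1; apply: H => c Hc; apply: NNPP => H2; apply: H1; by exists c.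
have H1 : bsat al c.1 by apply: NNPP => H3; apply: H' => //.
have H2 : ~~ bsat al c.2 by apply/negP => H3; apply: H'.
have Hle : at_ al ≦ beval J c.2 := le_trans (atom_sat hJ H1) (HG.2 c Hc).
by rewrite (test_le_eq (atomk_test hJ al) (beval_test hJ _) Hle) atom_unsat.
Qed.

Lemma bad_trans a al b : List.In a Ga -> bsat al a.1.1 -> ~~ bsat b a.2 ->
  at_ al ⊗ I a.1.2 ⊗ at_ b = kzero K.
Proof.
move=> Ha H1 H2.
rewrite (atom_sat_eq hJ H1) (atom_unsat_eq hJ H2).
have -> : at_ al ⊗ beval J a.1.1 ⊗ I a.1.2 ⊗ (kneg (beval J a.2) ⊗ at_ b) =
  at_ al ⊗ (beval J a.1.1 ⊗ I a.1.2 ⊗ kneg (beval J a.2)) ⊗ at_ b by rewrite !kmulA.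
by rewrite (HG.1 a Ha) kmul0r kmul0l.
Qed.

Variable Q : finType.
Variable dl : Q -> atom l -> 'I_k -> Q.
Variable z : Q -> K.
Hypothesis zstep : forall q al p, z q ⊗ at_ al ⊗ I p ≦ z (dl q al p).

Definition Post e q al q' b := exists x, GSG Ga Gt e x /\ x.1 = al /\ run dl q x = q' /\ glast x = b.
Definition RHS e q al :=
  ksum (fun qb : Q * atom l => Post e q al qb.1 qb.2) (fun qb => z qb.1 ⊗ at_ qb.2).

Lemma Post_cat e1 e2 e3 q al q1 b1 q2 b2 :
  (forall x y, GSG Ga Gt e1 x -> GSG Ga Gt e2 y -> glast x = gfirst y ->
     GSG Ga Gt e3 (x.1, x.2 ++ y.2)) ->
  Post e1 q al q1 b1 -> Post e2 q1 b1 q2 b2 -> Post e3 q al q2 b2.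
Proof.
move=> H [x [Hx [Hx1 [Hx2 Hx3]]]] [y [Hy [Hy1 [Hy2 Hy3]]]].
have Hxy : glast x = gfirst y by rewrite Hx3 -Hy1.
exists (x.1, x.2 ++ y.2); split; first exact: H.
split => //; split; first by rewrite run_fuse // Hx2.
by rewrite glast_fuse.
Qed.

Lemma RHS_cat e1 e2 e3 q al q1 b1 :
  (forall x y, GSG Ga Gt e1 x -> GSG Ga Gt e2 y -> glast x = gfirst y ->
     GSG Ga Gt e3 (x.1, x.2 ++ y.2)) ->
  Post e1 q al q1 b1 -> RHS e2 q1 b1 ≦ RHS e3 q al.
Proof.
move=> H HP; apply: ksum_mono => [[q2 b2]] /= HP2; exists (q2, b2) => //; last exact: le_refl.
exact: Post_cat HP HP2.
Qed.

Lemma claim e : forall q al c, c ≦ z q ⊗ at_ al -> c ⊗ keval I J e ≦ RHS e q al.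
Proof.
have Hat := atomk_test hJ.
move=> q al c Hc.
case: (classic (AtG Gt al)) => Hal; last first.
  rewrite bad_atom // kmul0r in Hc; rewrite (le0_eq Hc) kmul0l; exact: le0.
elim: e q al c Hal Hc => [p|b|e1 IH1 e2 IH2|e1 IH1 e2 IH2|e1 IH1] q al c Hal Hc /=.
- apply: le_trans (mul_ler _ Hc) _.
  rewrite -(kmul1r (_ ⊗ I p)); apply: le_trans (mul_lel _ (sum_atoms hJ)) _.
  rewrite ksum_mull; apply: ksum_le => b _.
  case: (classic (AtG Gt b)) => Hb; last by rewrite /= (bad_atom Hb) kmul0r; apply: le0.
  case: (classic (forall a, List.In a Ga -> a.1.2 = p -> bsat al a.1.1 -> bsat b a.2)) => Hc2.
    apply: (@le_ksum _ _ _ _ (dl q al p, b)) => /=.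
      exists (al, [:: (p, b)]); split; first by exists al, b.
      by split.
    exact: mul_ler.
  have [a [Ha Hn]] : exists a, List.In a Ga /\ ~ (a.1.2 = p -> bsat al a.1.1 -> bsat b a.2).
    apply: NNPP => H1; apply: Hc2 => a Ha; apply: NNPP => H2; apply: H1; by exists a.
  have Hp : a.1.2 = p by apply: NNPP => H; apply: Hn.
  have H1 : bsat al a.1.1 by apply: NNPP => H; apply: Hn.
  have H2 : ~~ bsat b a.2 by apply/negP => H; apply: Hn.
  have -> : z q ⊗ at_ al ⊗ I p ⊗ at_ b = z q ⊗ (at_ al ⊗ I a.1.2 ⊗ at_ b) by rewrite Hp !kmulA.
  rewrite bad_trans // kmul0r; exact: le0.
- apply: le_trans (mul_ler _ Hc) _.
  case: (boolP (bsat al b)) => Hb.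
    rewrite -kmulA -(atom_sat_eq hJ Hb).
    apply: (@le_ksum _ _ _ _ (q, al)) => /=; last exact: le_refl.
    by exists (al, [::]).
  rewrite -kmulA atom_unsat // kmul0r; exact: le0.
- rewrite kmulDl; apply: add_le.
    apply: le_trans (IH1 _ _ _ Hal Hc) _; apply: ksum_mono => qb H; exists qb => //; last exact: le_refl.
    case: H => x [H1 H2]; exists x; split => //; by left.
  apply: le_trans (IH2 _ _ _ Hal Hc) _; apply: ksum_mono => qb H; exists qb => //; last exact: le_refl.
  case: H => x [H1 H2]; exists x; split => //; by right.
- rewrite kmulA; apply: le_trans (mul_ler _ (IH1 _ _ _ Hal Hc)) _.
  rewrite ksum_mulr; apply: ksum_le => [[q1 b1]] /= HP.
  have Hb1 : AtG Gt b1.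
    case: HP => x [Hx [_ [_ <-]]]; apply: glast_good; exact: GSG_good Hx.
  apply: le_trans (IH2 _ _ _ Hb1 (le_refl _)) _.
  apply: RHS_cat HP => x y Hx Hy Hxy /=; by exists x, y.
- apply: star_ind_r.
    apply: le_trans Hc _; apply: (@le_ksum _ _ _ _ (q, al)) => /=; last exact: le_refl.
    by exists (al, [::]); split => //; exists 0.
  rewrite ksum_mulr; apply: ksum_le => [[q1 b1]] /= HP.
  have Hb1 : AtG Gt b1.
    case: HP => x [[n Hx] [_ [_ <-]]]; apply: glast_good.
    apply: gpow_good Hx => w; exact: GSG_good.
  apply: le_trans (IH1 _ _ _ Hb1 (le_refl _)) _.
  apply: RHS_cat HP => x y [n Hx] Hy Hxy; exists n.+1; apply: gpow_snoc => //.
  move=> w Hw; apply: glast_good; exact: GSG_good Hw.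
Qed.

End Claim.


Section MY.
Variable K : KAT.
Variables k l : nat.
Variable I : 'I_k -> K.
Variable J : 'I_l -> K.
Variable Q : finType.
Variable dl : Q -> atom l -> 'I_k -> Q.

Definition R0 (i j : Q) : K :=
  (if i == j then kone K else kzero K) ⊕
  ksum (fun ap : atom l * 'I_k => dl i ap.1 ap.2 = j) (fun ap => atomk J ap.1 ⊗ I ap.2).

Fixpoint Rl (ps : seq Q) (i j : Q) : K :=
  match ps with
  | [::] => R0 i j
  | m :: ps' => Rl ps' i j ⊕ Rl ps' i m ⊗ kstar (Rl ps' m m) ⊗ Rl ps' m j
  end.

Lemma R0_le ps i j : R0 i j ≦ Rl ps i j.
Proof. elim: ps => [|m ps IH] /=; [exact: le_refl | exact: le_trans IH (le_addl _ _)]. Qed.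

Lemma R0_step i al p : atomk J al ⊗ I p ≦ R0 i (dl i al p).
Proof. apply: le_trans (le_addr _ _); exact: (@le_ksum _ _ _ _ (al, p)) (le_refl _). Qed.

Lemma R0_one i : kone K ≦ R0 i i.
Proof. rewrite /R0 eqxx; exact: le_addl. Qed.

Lemma Rsound (y : Q -> K) : (forall i j, R0 i j ⊗ y j ≦ y i) ->
  forall ps i j, Rl ps i j ⊗ y j ≦ y i.
Proof.
move=> Hy; elim=> [|m ps IH] i j //=.
rewrite kmulDr; apply: add_le => //.
rewrite -!kmulA; apply: le_trans (IH i m); apply: mul_lel.
apply: le_trans (mul_lel _ (IH m j)) _.
apply: star_ind_l; [exact: le_refl | exact: IH].
Qed.

Lemma Rtrans ps : forall j, j \in ps -> forall i l', Rl ps i j ⊗ Rl ps j l' ≦ Rl ps i l'.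
Proof.
elim: ps => [|m ps IH] j //; rewrite in_cons => Hj i l' /=.
set S := kstar (Rl ps m m).
have Hgoal : forall x, x ≦ Rl ps i m ⊗ S ⊗ Rl ps m l' -> x ≦
    Rl ps i l' ⊕ Rl ps i m ⊗ S ⊗ Rl ps m l'.
  move=> x Hx; exact: le_trans Hx (le_addr _ _).
case/orP: Hj => [/eqP ->|Hj].
  apply: Hgoal.
  have H1 : Rl ps i m ⊕ Rl ps i m ⊗ S ⊗ Rl ps m m ≦ Rl ps i m ⊗ S.
    apply: add_le.
      rewrite -{1}(kmul1r (Rl ps i m)); apply: mul_lel; exact: one_le_star.
    rewrite -kmulA; apply: mul_lel; exact: star_mul_le.
  have H2 : Rl ps m l' ⊕ Rl ps m m ⊗ S ⊗ Rl ps m l' ≦ S ⊗ Rl ps m l'.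
    apply: add_le.
      rewrite -{1}(kmul1l (Rl ps m l')); apply: mul_ler; exact: one_le_star.
    apply: mul_ler; exact: mul_star_le.
  apply: le_trans (mul_le2 H1 H2) _.
  rewrite -!kmulA; apply: mul_lel; rewrite !kmulA; apply: mul_ler; exact: star_star_le.
rewrite kmulDl !kmulDr; apply: add_le; apply: add_le.
- exact: le_trans (IH _ Hj _ _) (le_addl _ _).
- apply: Hgoal; rewrite -!kmulA; do 2 apply: mul_lel; exact: IH.
- apply: Hgoal; rewrite !kmulA; do 2 apply: mul_ler; exact: IH.
- apply: Hgoal.
  have -> : Rl ps i m ⊗ S ⊗ Rl ps m j ⊗ (Rl ps j m ⊗ S ⊗ Rl ps m l') =
            Rl ps i m ⊗ (S ⊗ (Rl ps m j ⊗ Rl ps j m) ⊗ S) ⊗ Rl ps m l' by rewrite !kmulA.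
  apply: mul_ler; apply: mul_lel.
  apply: le_trans (_ : S ⊗ S ≦ S); last exact: star_star_le.
  apply: mul_ler; apply: le_trans (mul_lel _ (IH _ Hj _ _)) _; exact: star_mul_le.
Qed.

Definition Rf := Rl (enum Q).

Lemma Rf_trans i j l' : Rf i j ⊗ Rf j l' ≦ Rf i l'.
Proof. apply: Rtrans; by rewrite mem_enum. Qed.

Lemma Rf_step q0 q al p : Rf q0 q ⊗ atomk J al ⊗ I p ≦ Rf q0 (dl q al p).
Proof.
rewrite -kmulA; apply: le_trans (Rf_trans q0 q _); apply: mul_lel.
apply: le_trans (R0_le _ _ _); exact: R0_step.
Qed.

Lemma Rf_one q : kone K ≦ Rf q q.
Proof. apply: le_trans (R0_le _ _ _); exact: R0_one. Qed.

End MY.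


Fixpoint beqb l (b c : bexp l) : bool :=
  match b, c with
  | BZero, BZero => true
  | BOne, BOne => true
  | BTest t, BTest t' => t == t'
  | BNeg b, BNeg c => beqb b c
  | BAdd b1 b2, BAdd c1 c2 => beqb b1 c1 && beqb b2 c2
  | BMul b1 b2, BMul c1 c2 => beqb b1 c1 && beqb b2 c2
  | _, _ => false
  end.

Lemma beqbP l : Equality.axiom (@beqb l).
Proof.
elim=> [||t|b IH|b1 IH1 b2 IH2|b1 IH1 b2 IH2] [||t'|c|c1 c2|c1 c2] /=; try by constructor.
- by apply: (iffP eqP) => [->|[]].
- by apply: (iffP (IH c)) => [->|[]].
- apply: (iffP andP) => [[/IH1 -> /IH2 ->]|[<- <-]] //; split; [exact/IH1|exact/IH2].
- apply: (iffP andP) => [[/IH1 -> /IH2 ->]|[<- <-]] //; split; [exact/IH1|exact/IH2].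
Qed.

HB.instance Definition _ l := hasDecEq.Build (bexp l) (@beqbP l).

Fixpoint keqb k l (e f : kexp k l) : bool :=
  match e, f with
  | KAct p, KAct p' => p == p'
  | KTest b, KTest c => b == c
  | KAdd e1 e2, KAdd f1 f2 => keqb e1 f1 && keqb e2 f2
  | KMul e1 e2, KMul f1 f2 => keqb e1 f1 && keqb e2 f2
  | KStar e, KStar f => keqb e f
  | _, _ => false
  end.

Lemma keqbP k l : Equality.axiom (@keqb k l).
Proof.
elim=> [p|b|e1 IH1 e2 IH2|e1 IH1 e2 IH2|e IH] [p'|c|f1 f2|f1 f2|f] /=; try by constructor.
- by apply: (iffP eqP) => [->|[]].
- by apply: (iffP eqP) => [->|[]].
- apply: (iffP andP) => [[/IH1 -> /IH2 ->]|[<- <-]] //; split; [exact/IH1|exact/IH2].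
- apply: (iffP andP) => [[/IH1 -> /IH2 ->]|[<- <-]] //; split; [exact/IH1|exact/IH2].
- by apply: (iffP (IH f)) => [->|[]].
Qed.

HB.instance Definition _ k l := hasDecEq.Build (kexp k l) (@keqbP k l).

Section Deriv.
Variables k l : nat.
Notation kx := (kexp k l).

Fixpoint Eps (al : atom l) (e : kx) : bool :=
  match e with
  | KAct _ => false
  | KTest b => bsat al b
  | KAdd g h => Eps al g || Eps al h
  | KMul g h => Eps al g && Eps al h
  | KStar _ => true
  end.

Fixpoint Der (al : atom l) (p : 'I_k) (e : kx) : seq kx :=
  match e with
  | KAct q => if q == p then [:: (@KTest k l BOne)] else [::]
  | KTest _ => [::]
  | KAdd g h => Der al p g ++ Der al p h
  | KMul g h => map (fun d => KMul d h) (Der al p g) ++ (if Eps al g then Der al p h else [::])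
  | KStar g => map (fun d => KMul d (KStar g)) (Der al p g)
  end.

Fixpoint PD (e : kx) : seq kx :=
  match e with
  | KAct _ => [:: (@KTest k l BOne)]
  | KTest _ => [::]
  | KAdd g h => PD g ++ PD h
  | KMul g h => map (fun d => KMul d h) (PD g) ++ PD h
  | KStar g => map (fun d => KMul d (KStar g)) (PD g)
  end.

Lemma Der_PD al p e d : d \in Der al p e -> d \in PD e.
Proof.
elim: e d => [q|b|g IHg h IHh|g IHg h IHh|g IHg] d /=.
- by case: (q == p).
- by [].
- by rewrite !mem_cat => /orP [/IHg ->|/IHh ->] //; rewrite orbT.
- rewrite !mem_cat => /orP [/mapP [d0 Hd0 ->]|].
    by rewrite map_f // IHg.
  by case: (Eps al g) => // /IHh ->; rewrite orbT.
- by move=> /mapP [d0 Hd0 ->]; rewrite map_f // IHg.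
Qed.

Lemma PD_closed al p e d d' : d \in PD e -> d' \in Der al p d -> d' \in PD e.
Proof.
elim: e d d' => [q|b|g IHg h IHh|g IHg h IHh|g IHg] d d' /=.
- by rewrite inE => /eqP ->.
- by [].
- by rewrite !mem_cat => /orP [/IHg H /H ->|/IHh H /H ->] //; rewrite orbT.
- rewrite !mem_cat => /orP [/mapP [d0 Hd0 ->]|Hd Hd'].
    rewrite /= mem_cat => /orP [/mapP [d1 Hd1 ->]|].
      by rewrite map_f // (IHg d0).
    case: (Eps al d0) => // /Der_PD ->; by rewrite orbT.
  by rewrite (IHh d) // orbT.
- move=> /mapP [d0 Hd0 ->] /=; rewrite mem_cat => /orP [/mapP [d1 Hd1 ->]|].
    by rewrite map_f // (IHg d0).
  case: (Eps al d0) => // /mapP [d1 Hd1 ->]; by rewrite map_f // (Der_PD Hd1).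
Qed.

Lemma AtG_nil (al : atom l) : AtG [::] al. Proof. by []. Qed.

Lemma gpow_mono Gt (X Y : gset k l) n x :
  (forall w, X w -> Y w) -> gpow Gt X n x -> gpow [::] Y n x.
Proof.
move=> HXY; elim: n x => [|n IH] x /=.
  move=> H; split; [exact: H.1 | done].
move=> [x1 [x2 [H1 [H2 H3]]]]; exists x1, x2; split; [exact: HXY | split; [exact: IH|done]].
Qed.

Lemma GSG_plain (Ga : seq (bexp l * 'I_k * bexp l)) (Gt : seq (bexp l * bexp l)) (e : kx) x : GSG Ga Gt e x -> GSG [::] [::] e x.
Proof.
elim: e x => [p|b|e1 IH1 e2 IH2|e1 IH1 e2 IH2|e1 IH1] x /=.
- by move=> [a [b [-> _]]]; exists a, b; do 3 (split => //).
- by move=> [H1 [H2 H3]]; do 2 (split => //).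
- case; auto.
- move=> [x1 [x2 [H1 [H2 H3]]]]; exists x1, x2; auto.
- move=> [n Hn]; exists n; exact: gpow_mono Hn.
Qed.

Definition SemP (e : kx) (x : gstring k l) :=
  (x.2 = [::] -> Eps x.1 e) /\
  (forall p b s, x.2 = (p, b) :: s -> exists2 d, d \in Der x.1 p e & GSG [::] [::] d (b, s)).

Lemma glast_cons (al b : atom l) p (s : seq ('I_k * atom l)) :
  glast ((al, (p, b) :: s) : gstring k l) = glast ((b, s) : gstring k l).
Proof. by []. Qed.

Lemma Der_sem e x : GSG [::] [::] e x -> SemP e x.
Proof.
elim: e x => [q|b|g IHg h IHh|g IHg h IHh|g IHg] x /=.
- move=> [a [b [-> [_ [_ _]]]]]; split => // p b' s [<- <- <-] /=.
  by exists ((@KTest k l BOne)); [rewrite eqxx inE | do 2 (split => //)].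
- by move=> [H1 [_ H3]]; split => [_|p b' s] //; rewrite H1.
- case=> [/IHg [H1 H2]|/IHh [H1 H2]]; split => [Hx|p b s Hx].
  + by apply/orP; left; apply: H1.
  + by have [d Hd Hd'] := H2 _ _ _ Hx; exists d => //; rewrite mem_cat Hd.
  + by apply/orP; right; apply: H1.
  + by have [d Hd Hd'] := H2 _ _ _ Hx; exists d => //; rewrite mem_cat Hd orbT.
- move=> [x1 [x2 [Hx1 [Hx2 [Hl ->]]]]] /=.
  have [A1 A2] := IHg _ Hx1; have [B1 B2] := IHh _ Hx2.
  case E: x1.2 Hl A1 A2 => [|[p b] s1] Hl A1 A2 /=.
    have Ex : x2.1 = x1.1 by rewrite -[x2.1]/(gfirst x2) -Hl /glast E.
    split => [Hx|p b s Hx].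
      by apply/andP; split; [apply: A1 | rewrite -Ex; apply: B1].
    have [d Hd Hd'] := B2 _ _ _ Hx; exists d => //.
    have HA : Eps x1.1 g by apply: A1.
    by rewrite /= mem_cat HA -Ex Hd orbT.
  split => // p' b' s [<- <- <-].
  have [d Hd Hd'] := A2 _ _ _ (erefl _).
  exists (KMul d h); first by rewrite mem_cat map_f.
  exists (b, s1), x2; split => //; split => //; split => //.
  by rewrite -Hl /glast E.
- move=> [n Hn]; elim: n x Hn => [|n IHn] x /=.
    by move=> [H1 _]; split => // p b s; rewrite H1.
  move=> [x1 [x2 [Hx1 [Hx2 [Hl ->]]]]] /=.
  have [A1 A2] := IHg _ Hx1.
  case E: x1.2 Hl A1 A2 => [|[p b] s1] Hl A1 A2 /=.
    have Ex : x2.1 = x1.1 by rewrite -[x2.1]/(gfirst x2) -Hl /glast E.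
    have [B1 B2] := IHn _ Hx2.
    split => [Hx|p b s Hx] //.
    have [d Hd Hd'] := B2 _ _ _ Hx; exists d => //; by rewrite -Ex.
  split => // p' b' s [<- <- <-].
  have [d Hd Hd'] := A2 _ _ _ (erefl _).
  exists (KMul d (KStar g)); first by rewrite map_f.
  exists (b, s1), x2; split => //; split; first by exists n.
  by split => //; rewrite -Hl /glast E.
Qed.

Section DerK.
Variable K : KAT.
Variable I : 'I_k -> K.
Variable J : 'I_l -> K.
Hypothesis hJ : forall t, ktest (J t).

Lemma Eps_le al e : Eps al e -> atomk J al ≦ keval I J e.
Proof.
have Ha := atomk_test hJ al.
elim: e => [q|b|g IHg h IHh|g IHg h IHh|g IHg] //=.
- exact: atom_sat.
- case/orP=> H; [exact: le_trans (IHg H) (le_addl _ _)|exact: le_trans (IHh H) (le_addr _ _)].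
- case/andP=> H1 H2; rewrite -(atomk_idem hJ); exact: mul_le2 (IHg H1) (IHh H2).
- move=> _; apply: le_trans (one_le_star _); exact: test_le1.
Qed.

Lemma Der_le al p e d : d \in Der al p e -> atomk J al ⊗ I p ⊗ keval I J d ≦ keval I J e.
Proof.
have Ha := atomk_test hJ al.
elim: e d => [q|b|g IHg h IHh|g IHg h IHh|g IHg] d //=.
- case: eqP => [->|_] //; rewrite inE => /eqP -> /=; rewrite kmul1r; exact: test_mul_ler.
- rewrite mem_cat => /orP [/IHg H|/IHh H];
    [exact: le_trans H (le_addl _ _)|exact: le_trans H (le_addr _ _)].
- rewrite mem_cat => /orP [/mapP [d0 Hd0 ->]|] /=.
    rewrite kmulA; apply: mul_ler; exact: IHg.
  case E: (Eps al g) => // /IHh H.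
  have -> : atomk J al ⊗ I p ⊗ keval I J d = atomk J al ⊗ (atomk J al ⊗ I p ⊗ keval I J d).
    by rewrite !kmulA atomk_idem.
  apply: mul_le2 H; exact: Eps_le.
- move=> /mapP [d0 Hd0 ->] /=; rewrite kmulA.
  apply: le_trans (mul_ler _ (IHg _ Hd0)) _; exact: mul_star_le.
Qed.
End DerK.
End Deriv.


Section Compl.
Variable K : KAT.
Variables k l : nat.
Variable I : 'I_k -> K.
Variable J : 'I_l -> K.
Hypothesis hJ : forall t, ktest (J t).
Variable Ga : seq (bexp l * 'I_k * bexp l).
Variable Gt : seq (bexp l * bexp l).
Hypothesis HG : Gamma_holds I J Ga Gt.
Variable f : kexp k l.

Definition uf : seq (kexp k l) := f :: PD f.
Definition mf := size uf.
Definition uu (i : 'I_mf) := nth f uf i.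
Definition dlf (S : {set 'I_mf}) (al : atom l) (p : 'I_k) : {set 'I_mf} :=
  [set j | [exists i in S, uu j \in Der al p (uu i)]].
Definition accf (S : {set 'I_mf}) (al : atom l) := [exists i in S, Eps al (uu i)].
Definition yf (S : {set 'I_mf}) := ksum (fun i => i \in S) (fun i => keval I J (uu i)).
Definition i0 : 'I_mf := Ordinal (ltn0Sn (size (PD f))).
Definition q0 : {set 'I_mf} := [set i0].

Lemma uf_closed al p g d : g \in uf -> d \in Der al p g -> d \in uf.
Proof.
rewrite /uf !in_cons => /orP [/eqP ->|Hg] Hd; apply/orP; right.
  exact: Der_PD Hd.
exact: PD_closed Hg Hd.
Qed.

Lemma acc_run x : GSG [::] [::] f x -> accf (run dlf q0 x) (glast x).
Proof.
suff H : forall s al (S : {set 'I_mf}) i, i \in S -> GSG [::] [::] (uu i) (al, s) ->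
   accf (runl dlf S al s) (glast ((al, s) : gstring k l)).
  move=> Hx; case: x Hx => al s Hx; apply: (H s al q0 i0); first by rewrite inE.
  by rewrite /uu /=.
elim=> [|[p b] s IH] al S i Hi Hx.
  have [H1 _] := Der_sem Hx; apply/existsP; exists i; rewrite Hi /=; exact: H1.
have [_ H2] := Der_sem Hx.
have [d Hd Hd'] := H2 p b s (erefl _).
have Hdu : d \in uf by apply: uf_closed Hd; rewrite /uu mem_nth.
have Hj : index d uf < mf by rewrite /mf index_mem.
pose j : 'I_mf := Ordinal Hj.
have Huj : uu j = d by rewrite /uu /= nth_index.
rewrite /= glast_cons; apply: (IH b _ j).
  rewrite inE; apply/existsP; exists i; by rewrite Hi Huj.
by rewrite Huj.
Qed.

Lemma yf_R0 i j : R0 I J dlf i j ⊗ yf j ≦ yf i.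
Proof.
rewrite /R0 kmulDr; apply: add_le.
  case: eqP => [->|_]; [rewrite kmul1l; exact: le_refl | rewrite kmul0l; exact: le0].
rewrite ksum_mulr; apply: ksum_le => [[al p]] /= <-.
rewrite /yf ksum_mull; apply: ksum_le => j'; rewrite inE => /existsP [i' /andP [Hi' Hd]].
apply: (@le_ksum _ _ _ _ i') => //; exact: Der_le.
Qed.

Lemma accf_le S al : accf S al -> atomk J al ≦ yf S.
Proof.
move=> /existsP [i /andP [Hi He]]; apply: (@le_ksum _ _ _ _ i) => //; exact: Eps_le.
Qed.

Lemma yf_q0 : yf q0 ≦ keval I J f.
Proof. apply: ksum_le => i; rewrite inE => /eqP ->; exact: le_refl. Qed.

End Compl.

Section Compl2.
Variable K : KAT.
Variables k l : nat.
Variable I : 'I_k -> K.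
Variable J : 'I_l -> K.
Hypothesis hJ : forall t, ktest (J t).
Variable Ga : seq (bexp l * 'I_k * bexp l).
Variable Gt : seq (bexp l * bexp l).
Hypothesis HG : Gamma_holds I J Ga Gt.

Lemma incl e f : (forall x, GSG Ga Gt e x -> GSG Ga Gt f x) -> keval I J e ≦ keval I J f.
Proof.
move=> Hef.
pose z := Rf I J (dlf (f := f)) (q0 f).
have zstep : forall q al p, z q ⊗ atomk J al ⊗ I p ≦ z (dlf q al p) by move=> *; exact: Rf_step.
rewrite -(kmul1l (keval I J e)); apply: le_trans (mul_ler _ (sum_atoms hJ)) _.
rewrite ksum_mulr; apply: ksum_le => al _.
have Hc : atomk J al ≦ z (q0 f) ⊗ atomk J al.
  rewrite -{1}(kmul1l (atomk J al)); apply: mul_ler; exact: Rf_one.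
apply: le_trans (claim hJ HG zstep e Hc) _.
apply: ksum_le => [[q' b]] /= [x [Hx [Hx1 [Hx2 Hx3]]]].
have Hacc := acc_run (GSG_plain (Hef _ Hx)).
rewrite Hx2 Hx3 in Hacc.
apply: le_trans (mul_lel _ (accf_le I hJ Hacc)) _.
apply: le_trans _ (yf_q0 I J f).
exact: (Rsound (y := yf I J (f:=f)) (@yf_R0 _ _ _ I J hJ f)).
Qed.

End Compl2.


Section Model.
Variables k l : nat.
Variable Ga : seq (bexp l * 'I_k * bexp l).
Variable Gt : seq (bexp l * bexp l).
Notation gs := (gstring k l).

Definition gcar := {X : gset k l | forall x, X x -> goodgs Gt x}.

Lemma gext (X Y : gcar) : (forall x, sval X x <-> sval Y x) -> X = Y.
Proof.
case: X Y => [X HX] [Y HY] /= H.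
have E : X = Y by apply: functional_extensionality => x; apply: propositional_extensionality.
subst Y; f_equal; apply: proof_irrelevance.
Qed.

Lemma geq (X Y : gcar) : X = Y -> forall x, sval X x -> sval Y x.
Proof. by move=> ->. Qed.

Lemma fuse_mono (X X' Y Y' : gset k l) x :
  (forall w, X w -> X' w) -> (forall w, Y w -> Y' w) -> gfuse X Y x -> gfuse X' Y' x.
Proof. move=> H1 H2 [a [b [Ha [Hb [E ->]]]]]; exists a, b; auto. Qed.

Lemma fuse_iff (X X' Y Y' : gset k l) x :
  (forall w, X w <-> X' w) -> (forall w, Y w <-> Y' w) -> (gfuse X Y x <-> gfuse X' Y' x).
Proof.
move=> H1 H2; split; apply: fuse_mono => w; by [move/H1|move/H2|move/H1|move/H2].
Qed.

Lemma gpow_iff (X Y : gset k l) n x : (forall w, X w <-> Y w) -> (gpow Gt X n x <-> gpow Gt Y n x).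
Proof.
move=> H; elim: n x => [|n IH] x //=; apply: fuse_iff => //.
Qed.

Lemma fuse_assoc (X Y Z : gset k l) x : gfuse (gfuse X Y) Z x <-> gfuse X (gfuse Y Z) x.
Proof.
split.
  move=> [w [c [[a [b [Ha [Hb [Eab ->]]]]] [Hc [Ewc ->]]]]].
  exists a, (b.1, b.2 ++ c.2); split => //; split.
    exists b, c; split => //; split => //; split => //; by rewrite -Ewc glast_fuse.
  by split => //=; rewrite catA.
move=> [a [w [Ha [[b [c [Hb [Hc [Ebc ->]]]]] [Eaw ->]]]]].
exists (a.1, a.2 ++ b.2), c; split.
  by exists a, b.
split => //; split; first by rewrite glast_fuse.
by rewrite /= catA.
Qed.

Lemma fuse_one_l (X : gset k l) x : (forall w, X w -> AtG Gt w.1) ->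
  (gfuse (AtG_set Gt) X x <-> X x).
Proof.
move=> HX; split.
  move=> [[a s] [y [[Hs Ha] [Hy [E ->]]]]]; simpl in Hs; subst s.
  rewrite /glast /gfirst /= in E; rewrite /= E; by case: y Hy E.
move=> Hx; exists (x.1, [::]), x; split; first by rewrite /AtG_set /=; split => //; apply: HX.
split => //; split => //; by case: x Hx.
Qed.

Lemma fuse_one_r (X : gset k l) x : (forall w, X w -> AtG Gt (glast w)) ->
  (gfuse X (AtG_set Gt) x <-> X x).
Proof.
move=> HX; split.
  move=> [y [[a s] [Hy [[Hs Ha] [E ->]]]]]; simpl in Hs; subst s.
  rewrite /= cats0; by case: y Hy E.
move=> Hx; exists x, (glast x, [::]); split => //; split; first by rewrite /AtG_set /=; split => //; apply: HX.
split => //=; rewrite cats0; by case: x Hx.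
Qed.

Lemma pow_unsnoc (X : gset k l) n x : (forall w, X w -> goodgs Gt w) ->
  gpow Gt X n.+1 x -> gfuse (gpow Gt X n) X x.
Proof.
move=> HX; elim: n x => [|n IH] x.
  move=> /= /fuse_one_r H.
  have Hx : X x by apply: H => w /HX; exact: glast_good.
  apply/fuse_one_l => // w /HX []; done.
move=> /= Hx; apply/fuse_assoc; apply: fuse_mono Hx => // w; exact: IH.
Qed.

Definition gtest (X : gset k l) := forall x, X x -> x.2 = [::].

Lemma fuse_test (X Y : gset k l) x : gtest X -> gtest Y -> (gfuse X Y x <-> X x /\ Y x).
Proof.
move=> HX HY; split.
  move=> [[a1 a2] [[b1 b2] [Ha [Hb [E ->]]]]].
  have Ea := HX _ Ha; have Eb := HY _ Hb; simpl in Ea, Eb; subst a2 b2.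
  rewrite /glast /gfirst /= in E; subst b1; by split.
move=> [Hx Hy]; exists x, x; split => //; split => //; have E := HX _ Hx.
split; first by rewrite /glast /gfirst E.
by case: x Hx Hy E => a s /= _ _ ->.
Qed.

Lemma gadd_good (X Y : gcar) x : sval X x \/ sval Y x -> goodgs Gt x.
Proof. case=> H; [exact: (proj2_sig X) | exact: (proj2_sig Y)]. Qed.
Definition gadd (X Y : gcar) : gcar := exist _ _ (@gadd_good X Y).

Lemma gmul_good (X Y : gcar) x : gfuse (sval X) (sval Y) x -> goodgs Gt x.
Proof.
move=> [a [b [Ha [Hb [_ ->]]]]]; apply: fuse_good; [exact: (proj2_sig X) | exact: (proj2_sig Y)].
Qed.
Definition gmul (X Y : gcar) : gcar := exist _ _ (@gmul_good X Y).

Lemma gstar_good (X : gcar) x : (exists n, gpow Gt (sval X) n x) -> goodgs Gt x.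
Proof. move=> [n Hn]; apply: gpow_good Hn; exact: (proj2_sig X). Qed.
Definition gstar (X : gcar) : gcar := exist _ _ (@gstar_good X).

Lemma gzero_good (x : gs) : (fun _ : gs => False) x -> goodgs Gt x. Proof. by []. Qed.
Definition gzero : gcar := exist _ _ gzero_good.

Lemma gone_good (x : gs) : AtG_set Gt x -> goodgs Gt x.
Proof. by move=> [H1 H2]; split => //; rewrite H1. Qed.
Definition gone : gcar := exist _ _ gone_good.

Definition gneg_set (X : gcar) : gset k l := fun x => x.2 = [::] /\ AtG Gt x.1 /\ ~ sval X x.
Lemma gneg_good (X : gcar) x : gneg_set X x -> goodgs Gt x.
Proof. by move=> [H1 [H2 _]]; split => //; rewrite H1. Qed.
Definition gneg (X : gcar) : gcar := exist _ _ (@gneg_good X).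

Definition gktest (X : gcar) : Prop := gtest (sval X).

Lemma good1 (X : gcar) w : sval X w -> AtG Gt w.1.
Proof. by move/(proj2_sig X) => []. Qed.
Lemma goodl (X : gcar) w : sval X w -> AtG Gt (glast w).
Proof. move/(proj2_sig X); exact: glast_good. Qed.

Lemma m_addA x y z : gadd x (gadd y z) = gadd (gadd x y) z.
Proof. apply: gext => w /=; tauto. Qed.
Lemma m_addC x y : gadd x y = gadd y x.
Proof. apply: gext => w /=; tauto. Qed.
Lemma m_add0 x : gadd x gzero = x.
Proof. apply: gext => w /=; tauto. Qed.
Lemma m_addI x : gadd x x = x.
Proof. apply: gext => w /=; tauto. Qed.
Lemma m_mulA x y z : gmul x (gmul y z) = gmul (gmul x y) z.
Proof. apply: gext => w /=; split => /fuse_assoc //. Qed.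
Lemma m_mul1l x : gmul gone x = x.
Proof. apply: gext => w /=; apply: fuse_one_l; exact: good1. Qed.
Lemma m_mul1r x : gmul x gone = x.
Proof. apply: gext => w /=; apply: fuse_one_r; exact: goodl. Qed.
Lemma m_mulDl x y z : gmul x (gadd y z) = gadd (gmul x y) (gmul x z).
Proof.
apply: gext => w /=; split.
  move=> [a [b [Ha [[Hb|Hb] H]]]]; [left|right]; by exists a, b.
by case=> [[a [b [Ha [Hb H]]]]|[a [b [Ha [Hb H]]]]]; exists a, b; split => //; split => //; [left|right].
Qed.
Lemma m_mulDr x y z : gmul (gadd x y) z = gadd (gmul x z) (gmul y z).
Proof.
apply: gext => w /=; split.
  move=> [a [b [[Ha|Ha] H]]]; [left|right]; by exists a, b.
by case=> [[a [b [Ha H]]]|[a [b [Ha H]]]]; exists a, b; split => //; [left|right].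
Qed.
Lemma m_mul0l x : gmul gzero x = gzero.
Proof. apply: gext => w /=; split => // [[a [b [Ha _]]]] //. Qed.
Lemma m_mul0r x : gmul x gzero = gzero.
Proof. apply: gext => w /=; split => // [[a [b [_ [Hb _]]]]] //. Qed.

Lemma m_unfoldl x : gadd (gadd gone (gmul x (gstar x))) (gstar x) = gstar x.
Proof.
apply: gext => w /=; split; last by right.
case; [case|] => //.
- by move=> H; exists 0.
- move=> [a [b [Ha [[n Hb] H]]]]; exists n.+1; by exists a, b.
Qed.

Lemma m_unfoldr x : gadd (gadd gone (gmul (gstar x) x)) (gstar x) = gstar x.
Proof.
apply: gext => w /=; split; last by right.
case; [case|] => //.
- by move=> H; exists 0.
- move=> [a [b [[n Ha] [Hb [E ->]]]]]; exists n.+1; apply: gpow_snoc => //; exact: goodl.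
Qed.

Lemma m_indl a b x : gadd (gadd b (gmul a x)) x = x -> gadd (gmul (gstar a) b) x = x.
Proof.
move=> /geq H; apply: gext => w /=; split; last by right.
have Hb : forall w, sval b w -> sval x w by move=> v Hv; apply: H; left; left.
have Ha : forall w, gfuse (sval a) (sval x) w -> sval x w by move=> v Hv; apply: H; left; right.
case=> // [[u [v [[n Hu] [Hv [E ->]]]]]].
have : gfuse (gpow Gt (sval a) n) (sval b) (u.1, u.2 ++ v.2) by exists u, v.
elim: n {u v Hu Hv E} (u.1, u.2 ++ v.2) => [|n IH] y /=.
  by move/fuse_one_l => /(_ (@good1 b)); apply: Hb.
move/fuse_assoc => Hy; apply: Ha; apply: fuse_mono Hy => // v; exact: IH.
Qed.

Lemma m_indr a b x : gadd (gadd b (gmul x a)) x = x -> gadd (gmul b (gstar a)) x = x.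
Proof.
move=> /geq H; apply: gext => w /=; split; last by right.
have Hb : forall w, sval b w -> sval x w by move=> v Hv; apply: H; left; left.
have Ha : forall w, gfuse (sval x) (sval a) w -> sval x w by move=> v Hv; apply: H; left; right.
case=> // [[u [v [Hu [[n Hv] [E ->]]]]]].
have : gfuse (sval b) (gpow Gt (sval a) n) (u.1, u.2 ++ v.2) by exists u, v.
elim: n {u v Hu Hv E} (u.1, u.2 ++ v.2) => [|n IH] y.
  by move/fuse_one_r => /(_ (@goodl b)); apply: Hb.
move=> Hy.
have Hy' : gfuse (sval b) (gfuse (gpow Gt (sval a) n) (sval a)) y.
  apply: fuse_mono Hy => // v; apply: pow_unsnoc; exact: (proj2_sig a).
move/fuse_assoc: Hy' => Hy'; apply: Ha; apply: fuse_mono Hy' => // v; exact: IH.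
Qed.

Lemma m_test0 : gktest gzero. Proof. by []. Qed.
Lemma m_test1 : gktest gone. Proof. by move=> x []. Qed.
Lemma m_testD b c : gktest b -> gktest c -> gktest (gadd b c).
Proof. by move=> Hb Hc x [/Hb|/Hc]. Qed.
Lemma m_testM b c : gktest b -> gktest c -> gktest (gmul b c).
Proof. by move=> Hb Hc x /(fuse_test _ Hb Hc) [/Hb]. Qed.
Lemma m_testN b : gktest b -> gktest (gneg b).
Proof. by move=> Hb x []. Qed.
Lemma m_mulC b c : gktest b -> gktest c -> gmul b c = gmul c b.
Proof. move=> Hb Hc; apply: gext => w /=; rewrite !fuse_test //; tauto. Qed.
Lemma m_addDr b c d : gktest b -> gktest c -> gktest d ->
  gadd b (gmul c d) = gmul (gadd b c) (gadd b d).
Proof.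
move=> Hb Hc Hd; apply: gext => w /=.
have H1 : gtest (fun x => sval b x \/ sval c x) by move=> x [/Hb|/Hc].
have H2 : gtest (fun x => sval b x \/ sval d x) by move=> x [/Hb|/Hd].
rewrite (fuse_test _ H1 H2) (fuse_test _ Hc Hd); tauto.
Qed.
Lemma m_compl1 b : gktest b -> gadd b (gneg b) = gone.
Proof.
move=> Hb; apply: gext => w /=; split.
  case=> [H|[H1 [H2 _]]]; last by split.
  by split; [apply: Hb | apply: (good1 H)].
move=> [H1 H2]; case: (classic (sval b w)) => H; [by left | by right].
Qed.
Lemma m_compl0 b : gktest b -> gmul b (gneg b) = gzero.
Proof.
move=> Hb; apply: gext => w /=; rewrite fuse_test //; last by move=> x [].
by split => // [[H [_ [_ H']]]].
Qed.

Definition GKAT : KAT :=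
  @MkKAT gcar gadd gmul gstar gzero gone gktest gneg
    m_addA m_addC m_add0 m_addI m_mulA m_mul1l m_mul1r m_mulDl m_mulDr m_mul0l m_mul0r
    m_unfoldl m_unfoldr m_indl m_indr m_test0 m_test1 m_testD m_testM m_testN
    m_mulC m_addDr m_compl1 m_compl0.

End Model.


Section Interp.
Variables k l : nat.
Variable Ga : seq (bexp l * 'I_k * bexp l).
Variable Gt : seq (bexp l * bexp l).
Notation M := (GKAT k Gt).

Lemma Im_good (p : 'I_k) (x : gstring k l) : GSG Ga Gt (@KAct k l p) x -> goodgs Gt x.
Proof. exact: GSG_good. Qed.
Definition Im (p : 'I_k) : M := exist _ _ (@Im_good p).

Definition Jset (t : 'I_l) : gset k l := fun x => x.2 = [::] /\ AtG Gt x.1 /\ x.1 t.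
Lemma Jm_good t (x : gstring k l) : Jset t x -> goodgs Gt x.
Proof. by move=> [H1 [H2 _]]; split => //; rewrite H1. Qed.
Definition Jm (t : 'I_l) : M := exist _ _ (@Jm_good t).

Lemma Jm_test t : ktest (Jm t). Proof. by move=> x []. Qed.

Lemma beval_model b x : sval (beval Jm b : M) x <-> x.2 = [::] /\ AtG Gt x.1 /\ bsat x.1 b.
Proof.
elim: b x => [|||b IH|b1 IH1 b2 IH2|b1 IH1 b2 IH2] x /=.
- by split => // [[_ [_ H]]].
- by split => [[H1 H2]|[H1 [H2 _]]].
- by [].
- split => [[H1 [H2 H3]]|[H1 [H2 H3]]]; do 2 (split => //).
    by apply/negP => H; apply: H3; apply/IH.
  by move/IH => [_ [_ H]]; move/negP: H3.
- rewrite IH1 IH2; split => [[|]|[H1 [H2 /orP [H|H]]]] ; try tauto.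
    by move=> [H1 [H2 H3]]; rewrite H3.
  by move=> [H1 [H2 H3]]; rewrite H3 orbT.
- have T1 : gtest (sval (beval Jm b1 : M)) by move=> y /IH1 [].
  have T2 : gtest (sval (beval Jm b2 : M)) by move=> y /IH2 [].
  rewrite (fuse_test _ T1 T2) IH1 IH2; split.
    by move=> [[H1 [H2 H3]] [_ [_ H4]]]; rewrite H3 H4.
  by move=> [H1 [H2 /andP [H3 H4]]].
Qed.

Lemma keval_model e x : sval (keval Im Jm e : M) x <-> GSG Ga Gt e x.
Proof.
elim: e x => [p|b|e1 IH1 e2 IH2|e1 IH1 e2 IH2|e1 IH1] x /=.
- by [].
- exact: beval_model.
- by rewrite IH1 IH2.
- exact: fuse_iff.
- have Hi : forall n y, gpow Gt (sval (keval Im Jm e1 : M)) n y <-> gpow Gt (GSG Ga Gt e1) n y.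
    by move=> n y; apply: gpow_iff.
  split=> [[n /Hi Hn]|[n /Hi Hn]]; by exists n.
Qed.

Lemma model_Gamma : Gamma_holds Im Jm Ga Gt.
Proof.
split.
  move=> a Ha; apply: gext => w /=; split => // [[u [c [[a0 [y [Ha0 [Hy [E1 ->]]]]] [Hc [E2 Ew]]]]]].
  have [Ha2 [_ Hb]] := (beval_model _ _).1 Ha0.
  move: Hc => [Hc2 [HcA Hc']].
  move: Hy => [al [be [Ey [_ [_ Hcond]]]]].
  have Eal : a0.1 = al.
    by rewrite /glast /gfirst Ha2 Ey /= in E1.
  have Ebe : c.1 = be.
    by rewrite -[c.1]/(gfirst c) -E2 (glast_fuse E1) Ey.
  apply: Hc'; apply: (beval_model _ _).2; do 2 (split => //).
  rewrite Ebe; apply: (Hcond a Ha) => //; by rewrite -Eal.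
move=> c Hc; apply: gext => w /=; split; last by right.
case=> // /(beval_model _ _).1 [H1 [H2 H3]]; apply/(beval_model _ _).2; do 2 (split => //); exact: H2.
Qed.

End Interp.

Theorem proposition6 (k l : nat) (hk : 0 < k) (hl : 0 < l)
  (Ga : seq (bexp l * 'I_k * bexp l)) (Gt : seq (bexp l * bexp l))
  (e1 e2 : kexp k l) :
  KAT_derivable Ga Gt e1 e2 <->
  (forall x : gstring k l, GSG Ga Gt e1 x <-> GSG Ga Gt e2 x).
Proof.
split.
  move=> H x.
  have E := H _ _ _ (@Jm_test k l Gt) (@model_Gamma k l Ga Gt).
  rewrite -keval_model E keval_model //.
move=> H K I J hJ HG; apply: le_antisym.
  exact: (incl hJ HG (fun x Hx => (H x).1 Hx)).
exact: (incl hJ HG (fun x Hx => (H x).2 Hx)).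
Qed.
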